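(* Let $P$ be a probability measure on $(\Omega,\mathcal{M})$, $\tau:\Omega\to[0,\infty]$ measurable, and $Q\in\mathcal{U}^\Lambda(P)$ for some $\Lambda:[0,\infty)\to[0,\infty]$ with $\Lambda(0)=0$ that is finite on a neighborhood of $0$. Then $$\log\Big[\int\tau\,dQ\Big]\le\inf_{c>1}\Big\{\frac1c\log\Big[\int\tau^c\,dP\Big]+\frac{c-1}{c}\Lambda\big(1/(c-1)\big)\Big\},$$ with the convention $-\infty+\infty=\infty$.
   Context: $\tau^c=\exp(c\log\tau)$ with continuous extensions of $\exp,\log$ to extended reals. $\Lambda_Q^f(\lambda)=\log E_Q[e^{\lambda f}]$. $\mathcal{U}^\Lambda(P)=\{Q \text{ probability measure}: Q\ll P,\ \Lambda_Q^{\log(dQ/dP)}(\lambda)\le\Lambda(\lambda)\ \text{for all }\lambda>0\}$. *)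

(* Defs.v *)
From HB Require Import structures.
From mathcomp Require Import all_boot all_order all_algebra.
From mathcomp Require Import all_classical all_reals all_analysis.
From mathcomp Require Import measurable_realfun.

(* Main.v *)
Require Import Defs.
From HB Require Import structures.
From mathcomp Require Import all_boot all_order all_algebra.
From mathcomp Require Import all_classical all_reals all_analysis.
From mathcomp Require Import measurable_realfun.
From mathcomp Require Import ring lra.
Import Order.TTheory GRing.Theory Num.Theory.
Local Open Scope classical_set_scope.
Local Open Scope ring_scope.
Local Open Scope charge_scope.
Local Open Scope ereal_scope.
Lemma measurable_lne (R : realType) : measurable_fun [set: \bar R] (@lne R).
Proof.
have -> : @lne R = fun x => if x <= 0 then -oo else if x == +oo then +oo
                            else (ln (fine x))%:E.
  apply/funext => -[r||] //=; by rewrite leNye.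

apply: measurable_fun_ifT => //=.

  exact: measurable_fun_lee.
apply: measurable_fun_ifT => //=; first exact: measurable_fun_eqe.
apply/measurable_EFinP => //=.
apply: measurableT_comp => //.
Qed.

Lemma measurable_expeR (R : realType) : measurable_fun [set: \bar R] (@expeR R).
Proof.
have -> : @expeR R = fun x => if x == +oo then +oo else if x == -oo then 0
                            else (expR (fine x))%:E.
  by apply/funext => -[r||].
apply: measurable_fun_ifT => //=; first exact: measurable_fun_eqe.
apply: measurable_fun_ifT => //=; first exact: measurable_fun_eqe.
apply/measurable_EFinP => //=.
apply: measurableT_comp => //.
Qed.
Lemma expeR_lne_pow (R : realType) (x : \bar R) (c : R) : (0 < c)%R -> 0 <= x ->
  expeR (c%:E * lne x) = x `^ c.
Proof.
move=> c0; case: x => [r||] //= r0.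
- have [r00|rp] := eqVneq r 0%R.
    rewrite r00 /= lexx /= gt0_muleNy //= powR0 //.
    by rewrite gt_eqF.
  have r0' : (0 < r)%R by rewrite lt_def rp /= -lee_fin.
  rewrite /= leNgt r0' /= /powR (negbTE rp).
  by rewrite mulrC.
- by rewrite gt0_muley //= gt_eqF // gt_eqF.
Qed.

Theorem mainTheorem11 (d : measure_display) (Omega : measurableType d)
  (R : realType) (P Q : probability Omega R) (tau : Omega -> \bar R)
  (Lambda : R -> \bar R) :
  measurable_fun [set: Omega] tau ->
  (forall x, 0 <= tau x) ->
  Lambda 0%R = 0 ->
  (forall l : R, (0 <= l)%R -> 0 <= Lambda l) ->
  (exists2 e : R, (0 < e)%R & forall l : R, (0 <= l)%R -> (l < e)%R ->
     Lambda l \is a fin_num) ->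
  Q `<< P ->
  (forall l : R, (0 < l)%R ->
     lne (\int[Q]_x expeR (l%:E * lne (('d (charge_of_finite_measure Q) '/d P) x)))
       <= Lambda l) ->
  lne (\int[Q]_x tau x) <=
    ereal_inf [set (((c^-1)%R%:E * lne (\int[P]_x expeR (c%:E * lne (tau x))))%E
                    + (((c - 1) / c)%R%:E * Lambda (c - 1)^-1%R)%E)%dE
              | c in `]1%R, +oo[%classic].
Proof.
move=> mtau tau0 _ _ _ QP HL.
apply: le_ereal_inf_tmp => _ [c /= c1 <-].
move: c1; rewrite in_itv /= andbT => c1.
have c0 : (0 < c)%R by apply: lt_trans c1.
have c10 : (0 < c - 1)%R by rewrite subr_gt0.
set l := (c - 1)^-1%R.
have l0 : (0 < l)%R by rewrite invr_gt0.
set q := (l + 1)%R.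
have q0 : (0 < q)%R by rewrite addr_gt0.
have qE : (q^-1 = (c - 1) / c)%R.
  by rewrite /q /l; field; rewrite !gt_eqF.

have pq : (c^-1 + q^-1 = 1)%R.
  by rewrite qE; field; rewrite gt_eqF.
set g := Radon_Nikodym_SigmaFinite.f Q P.
have g0 : forall x, 0 <= g x := Radon_Nikodym_SigmaFinite.f_ge0 QP.
have gfin : forall x, g x \is a fin_num := Radon_Nikodym_SigmaFinite.f_fin_num QP.
have mg : measurable_fun setT g.
  exact: measurable_int (Radon_Nikodym_SigmaFinite.f_integrable QP).
have cov h : (forall x, 0 <= h x) -> measurable_fun setT h ->
    \int[P]_x (h x * g x) = \int[Q]_x h x.
  move=> h0 mh; exact: Radon_Nikodym_SigmaFinite.change_of_variables.
have Zg := null_dominates_ae_eq measurableT QP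
  (ae_eq_Radon_Nikodym_SigmaFinite QP measurableT).
set A := \int[P]_x (tau x `^ c).
have -> : \int[P]_x expeR (c%:E * lne (tau x)) = A.
  by apply: eq_integral => x _; rewrite expeR_lne_pow.
set B := \int[P]_x (g x `^ q).
have HB : lne B <= Lambda l.
  have := HL l l0.
  suff -> : \int[Q]_x expeR (l%:E * lne ('d (charge_of_finite_measure Q) '/d P x)) = B by [].
  transitivity (\int[Q]_x expeR (l%:E * lne (g x))).
    apply: ae_eq_integral => //.
    - apply: measurableT_comp; first exact: measurable_expeR.
      apply: emeasurable_funM => //.
      apply: measurableT_comp; first exact: measurable_lne.
      by [].
    - apply: measurableT_comp; first exact: measurable_expeR.
      apply: emeasurable_funM => //.
      apply: measurableT_comp; first exact: measurable_lne.
      by [].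
    - by move: Zg; apply: filterS => x /= H /H <-.
  transitivity (\int[Q]_x (g x `^ l)).
    by apply: eq_integral => x _; rewrite expeR_lne_pow.
  rewrite -cov; last 2 first.
    - by move=> x; exact: poweR_ge0.
    - exact: measurableT_comp (measurable_poweR _) mg.
  apply: eq_integral => x _.
  have r0 : (0 <= fine (g x))%R by rewrite fine_ge0.
  rewrite -[g x]fineK ?gfin // !poweR_EFin -EFinM; congr EFin.
  rewrite /q powRD ?powRr1 //.
  by rewrite gt_eqF.
rewrite -(cov tau tau0 mtau).
set EQ := \int[P]_x (tau x * g x).
have EQ0 : 0 <= EQ by apply: integral_ge0 => x _; rewrite mule_ge0.
have A0 : 0 <= A by apply: integral_ge0 => x _; exact: poweR_ge0.
have B0 : 0 <= B by apply: integral_ge0 => x _; exact: poweR_ge0.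
have [Ay|Afin] := eqVneq A +oo.
  rewrite Ay /= gt0_muley ?lte_fin ?invr_gt0 // DualAddTheoryNumDomain.daddye; exact: leey.
have [By|Bfin] := eqVneq B +oo.
  have Ly : Lambda l = +oo by move: HB; rewrite By /= leye_eq => /eqP.
  rewrite Ly gt0_muley ?lte_fin ?divr_gt0 // DualAddTheoryNumDomain.daddey; exact: leey.
have [a Aa] : exists a, A = a%:E.
  by exists (fine A); rewrite fineK // ge0_fin_numE // ltey.
have [b Bb] : exists b, B = b%:E.
  by exists (fine B); rewrite fineK // ge0_fin_numE // ltey.
have a0 : (0 <= a)%R by rewrite -lee_fin -Aa.
have b0 : (0 <= b)%R by rewrite -lee_fin -Bb.
have H : EQ <= (a `^ c^-1 * b `^ q^-1)%:E.
  pose f := fun x => fine (tau x).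
  pose h := fun x => fine (g x).
  have mf : measurable_fun setT f by apply: measurableT_comp => //.
  have mh : measurable_fun setT h by apply: measurableT_comp => //.
  have Hh := hoelder P mf mh c0 q0 pq.
  have itau : P.-integrable setT (fun x => tau x `^ c).
    apply/integrableP; split; first exact: measurableT_comp (measurable_poweR _) mtau.
    under eq_integral do rewrite gee0_abs ?poweR_ge0 //.
    by rewrite -/A Aa ltry.
  have taufin : {ae P, forall x, setT x -> tau x \is a fin_num}.
    apply: filterS (integrable_ae measurableT itau) => x Hx /Hx.
    have := tau0 x.
    case: (tau x) => [r||] //=.
    by rewrite (gt_eqF c0).
  have LHS : EQ = 'N[P]_1[EFin \o (f \* h)%R].
    rewrite Lnorm1; apply: ae_eq_integral => //.
    - exact: emeasurable_funM.
    - apply: measurableT_comp => //; apply/measurable_EFinP; exact: measurable_funM.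
    - move: taufin; apply: filterS => x Hx _.
      rewrite /= /f /h ger0_norm; last by rewrite mulr_ge0 // fine_ge0.
      by rewrite EFinM !fineK // Hx.
  have NA : 'N[P]_c%:E[EFin \o f] = (a `^ c^-1)%:E.
    rewrite unlock -poweR_EFin -Aa; congr (_ `^ _).
    apply: ae_eq_integral => //.
    - apply: measurableT_comp (measurable_poweR _) _.
      by apply: measurableT_comp => //; apply/measurable_EFinP.
    - exact: measurableT_comp (measurable_poweR _) mtau.
    - move: taufin; apply: filterS => x Hx _.
      by rewrite /= /f ger0_norm ?fine_ge0 // -poweR_EFin fineK ?Hx.
  have NB : 'N[P]_q%:E[EFin \o h] = (b `^ q^-1)%:E.
    rewrite unlock -poweR_EFin -Bb; congr (_ `^ _).
    apply: eq_integral => x _.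
    by rewrite /= /h ger0_norm ?fine_ge0 // -poweR_EFin fineK.
  by rewrite LHS EFinM -NA -NB.
have [p0|ppos] := eqVneq (a `^ c^-1 * b `^ q^-1)%R 0%R.
  by rewrite le0_lneNy ?leNye //; move: H; rewrite p0.
have ap : (0 < a)%R.
  rewrite lt_def a0 andbT; apply: contra ppos => /eqP ->.
  by rewrite powR0 ?mul0r // invr_neq0 // gt_eqF.
have bp : (0 < b)%R.
  rewrite lt_def b0 andbT; apply: contra ppos => /eqP ->.
  by rewrite powR0 ?mulr0 // invr_neq0 // gt_eqF.
have [->|EQn0] := eqVneq EQ 0.
  by rewrite le0_lneNy ?leNye.
apply: (@le_trans _ _ (lne (a `^ c^-1 * b `^ q^-1)%:E)).
  by rewrite lee_lne ?in_itv /= ?EQ0 ?leey ?lee_fin ?mulr_ge0 ?powR_ge0.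
rewrite lne_EFin ?mulr_gt0 ?powR_gt0 // lnM ?posrE ?powR_gt0 // !ln_powR.
rewrite Aa lne_EFin //.
rewrite Bb lne_EFin // in HB.
case LL: (Lambda l) => [L| |].
- rewrite LL lee_fin in HB.
  rewrite -!EFinM -DualAddTheoryNumDomain.dEFinD lee_fin -qE lerD2l.
  by rewrite ler_wpM2l // invr_ge0 ltW.
- by rewrite gt0_muley ?lte_fin ?divr_gt0 // DualAddTheoryNumDomain.daddey leey.
- by rewrite LL in HB.
Qed.
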